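(* The structure $\mathcal{X}_{\mathrm{PNA}}=(X,\sqsubseteq,\oplus,X)$ is a down-closed BI frame.
   Context: Fix a set $\mathrm{Var}$ of variables; values are real numbers. For finite $S\subseteq\mathrm{Var}$, $\mathrm{Mem}[S]$ is the set of maps $S\to\mathbb{R}$, ordered pointwise; $p_A(m)$ is restriction. $\mathcal{D}(Y)$ denotes countably supported probability distributions on $Y$; for $\mu\in\mathcal{D}(\mathrm{Mem}[S])$, $\mathrm{dom}(\mu)=S$ and $\pi_A\mu$ is the marginal on $A\subseteq S$. $X=\bigcup_{S\text{ finite}}\mathcal{D}(\mathrm{Mem}[S])$, and $\mu\sqsubseteq\mu'$ iff $\mathrm{dom}(\mu)\subseteq\mathrm{dom}(\mu')$ and $\pi_{\mathrm{dom}(\mu)}\mu'=\mu$. A partition is a set of pairwise disjoint nonempty sets; $\mathcal{T}$ coarsens $\mathcal{S}$ if $\bigcup\mathcal{T}=\bigcup\mathcal{S}$ and each element of $\mathcal{T}$ is a union of a subfamily of $\mathcal{S}$. For a partition $\mathcal{S}$ with $\bigcup\mathcal{S}\subseteq\mathrm{dom}(\mu)$, $\mu$ is $\mathcal{S}$-PNA if for every $\mathcal{T}$ coarsening $\mathcal{S}$ and every family $(f_A:\mathrm{Mem}[A]\to[0,\infty))_{A\in\mathcal{T}}$ all non-decreasing or all non-increasing, $\mathbb{E}_{m\sim\mu}[\prod_Af_A(p_Am)]\le\prod_A\mathbb{E}_{m\sim\mu}[f_A(p_Am)]$. For $\mu_1\in\mathcal{D}(\mathrm{Mem}[S])$, $\mu_2\in\mathcal{D}(\mathrm{Mem}[T])$,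 $\mu_1\oplus\mu_2$ is empty if $S\cap T\neq\emptyset$ and otherwise is the set of $\mu\in\mathcal{D}(\mathrm{Mem}[S\cup T])$ with $\pi_S\mu=\mu_1$, $\pi_T\mu=\mu_2$ such that $\mu$ is $(\mathcal{S}\cup\mathcal{T})$-PNA for all partitions $\mathcal{S}$ of a subset of $S$ and $\mathcal{T}$ of a subset of $T$ with $\mu_1$ $\mathcal{S}$-PNA and $\mu_2$ $\mathcal{T}$-PNA. A (down-closed) BI frame is a tuple $(X,\sqsubseteq,\oplus,E)$, $\sqsubseteq$ a preorder, $\oplus:X\times X\to\mathcal{P}(X)$, $E\subseteq X$, satisfying: (Down-Closed) $z\in x\oplus y$, $x'\sqsubseteq x$, $y'\sqsubseteq y$ imply some $z'\sqsubseteq z$ with $z'\in x'\oplus y'$; (Commutativity) $z\in x\oplus y\Rightarrow z\in y\oplus x$; (Associativity) $w\in t\oplus z$ and $t\in x\oplus y$ imply some $s\in y\oplus z$ with $w\in x\oplus s$; (Unit Existence) for each $x$ some $e\in E$ has $x\in e\oplus x$; (Unit Coherence) $e\in E$, $x\in y\oplus e\Rightarrow y\sqsubseteq x$; (Unit Closure) $e\in E$, $e\sqsubseteq e'\Rightarrow e'\in E$. *)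

(* Defs.v *)
From HB Require Import structures.
From mathcomp Require Import all_boot all_order all_algebra.
From mathcomp Require Import all_classical all_reals.
From mathcomp Require Import ereal esum.
Set Implicit Arguments.
Unset Strict Implicit.
Unset Printing Implicit Defensive.
Import Order.TTheory GRing.Theory Num.Theory.
Local Open Scope classical_set_scope.
Local Open Scope ring_scope.

Section PNA.
Context {R : realType} {Var : Type}.

(* A memory "on S" (an element of Mem[S]) is
   encoded as a map that vanishes outside S (canonical bijection with S -> R,
   preserving the pointwise order and restriction). *)
Definition mem : Type := {classic (Var -> R)}.
Definition memOn (S : set Var) (m : mem) : Prop := forall x, ~ S x -> m x = 0.
Definition restr (A : set Var) (m : mem) : mem :=
  fun x => if `[< A x >] then m x else 0.
Definition mem_le (m1 m2 : mem) : Prop := forall x, m1 x <= m2 x.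

Record distr := Distr {
  dom : set Var;
  dom_fin : finite_set dom;
  mass : mem -> R;
  mass_ge0 : forall m, 0 <= mass m;
  mass_on : forall m, mass m != 0 -> memOn dom m;
  mass_cnt : countable [set m | mass m != 0];
  mass_sum : (\esum_(m in [set: mem]) (mass m)%:E = 1)%E }.

Definition marg (A : set Var) (mu : distr) (m' : mem) : R :=
  fine (\esum_(m in [set m : mem | restr A m = m']) (mass mu m)%:E).

Definition dle (mu mu' : distr) : Prop :=
  dom mu `<=` dom mu' /\ forall m', mass mu m' = marg (dom mu) mu' m'.

(* expectation of f (used for nonnegative f) *)
Definition Ex (mu : distr) (f : mem -> R) : \bar R :=
  (\esum_(m in [set: mem]) (mass mu m * f m)%:E)%E.

Definition setset : Type := {classic (set Var)}.

Definition is_partition (P : set setset) : Prop :=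
  (forall A, P A -> A !=set0) /\
  (forall A B, P A -> P B -> A <> B -> A `&` B = set0).

Definition bigU (P : set setset) : set Var := \bigcup_(A in P) (A : set Var).

Definition coarsens (T S : set setset) : Prop :=
  is_partition T /\ bigU T = bigU S /\
  forall A, T A -> exists F : set setset, F `<=` S /\ A = bigU F.

Definition nondecr_on (A : set Var) (f : mem -> R) : Prop :=
  forall m1 m2, memOn A m1 -> memOn A m2 -> mem_le m1 m2 -> f m1 <= f m2.
Definition nonincr_on (A : set Var) (f : mem -> R) : Prop :=
  forall m1 m2, memOn A m1 -> memOn A m2 -> mem_le m1 m2 -> f m2 <= f m1.

Definition PNA (mu : distr) (S : set setset) : Prop :=
  is_partition S /\ bigU S `<=` dom mu /\
  forall (T : set setset) (f : setset -> mem -> R),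
    coarsens T S ->
    (forall A, T A -> forall m, memOn A m -> 0 <= f A m) ->
    ((forall A, T A -> nondecr_on A (f A)) \/
     (forall A, T A -> nonincr_on A (f A))) ->
    (Ex mu (fun m => (\big[*%R/1%R]_(A \in T) f A (restr A m))%R)
      <= \big[*%E/1%E]_(A \in T) Ex mu (fun m => f A (restr A m)))%E.

Definition oplus (mu1 mu2 : distr) : set distr :=
  [set mu | (dom mu1 `&` dom mu2 = set0) /\
     dom mu = dom mu1 `|` dom mu2 /\
     (forall m', marg (dom mu1) mu m' = mass mu1 m') /\
     (forall m', marg (dom mu2) mu m' = mass mu2 m') /\
     (forall S T : set setset,
        is_partition S -> bigU S `<=` dom mu1 ->
        is_partition T -> bigU T `<=` dom mu2 ->
        PNA mu1 S -> PNA mu2 T -> PNA mu (S `|` T))].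

End PNA.

Definition DownClosedBIFrame (X : Type) (le : X -> X -> Prop)
    (op : X -> X -> set X) (E : set X) : Prop :=
  ((forall x, le x x) /\ (forall x y z, le x y -> le y z -> le x z)) /\
      (forall x y z x' y', op x y z -> le x' x -> le y' y ->
         exists2 z', le z' z & op x' y' z') /\
      (forall x y z, op x y z -> op y x z) /\
      (forall x y z t w, op t z w -> op x y t ->
         exists2 s, op y z s & op x s w) /\
      (forall x, exists2 e, E e & op e x x) /\
      (forall e x y, E e -> op y e x -> le y x) /\
      (forall e e', E e -> le e e' -> E e').

(* Main.v *)
Require Import Defs.
From HB Require Import structures.
From mathcomp Require Import all_boot all_order all_algebra.
From mathcomp Require Import all_classical all_reals.
From mathcomp Require Import ereal esum.
Set Implicit Arguments.
Unset Strict Implicit.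
Unset Printing Implicit Defensive.
Import Order.TTheory GRing.Theory Num.Theory.
Local Open Scope classical_set_scope.
Local Open Scope ring_scope.

Section S.
Context {R : realType} {Var : Type}.
Local Notation mem := (@Defs.mem R Var).
Local Notation distr := (@distr R Var).
Local Notation bigU := (@Defs.bigU Var).
Local Notation setset := (@Defs.setset Var).

Lemma restr_memOn (A : set Var) (m : mem) : memOn A (restr A m).
Proof. by move=> x Ax; rewrite /restr; case: asboolP. Qed.

Lemma memOn_restr (A : set Var) (m : mem) : memOn A m -> restr A m = m.
Proof.
move=> h; apply/funext => x; rewrite /restr; case: asboolP => // /h ->//.
Qed.

Lemma restr_sub (A B : set Var) (m : mem) : A `<=` B -> restr A (restr B m) = restr A m.
Proof.
move=> AB; apply/funext => x; rewrite /restr; case: asboolP => //= Ax.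
by case: asboolP => // /(_ (AB _ Ax)).
Qed.

Lemma restr_sub' (A B : set Var) (m : mem) : A `<=` B -> restr B (restr A m) = restr A m.
Proof.
move=> AB; apply/funext => x; rewrite /restr; case: asboolP => //= Ax.
by case: asboolP => // /AB.
Qed.


Local Open Scope ereal_scope.

Lemma esumZl (T : choiceType) (A : set T) (c : R) (a : T -> \bar R) :
  (0 <= c)%R -> (forall i, 0 <= a i) ->
  \esum_(i in A) (c%:E * a i) = c%:E * \esum_(i in A) a i.
Proof.
move=> c0 a0; rewrite /esum -ereal_supZl//; last first.
  by apply/set0P; exists (\sum_(i \in set0) a i); exists set0 => //; exact: fsets_set0.
congr ereal_sup; apply/seteqP; split => x /=.
- case=> B [finB BA] <-; exists (\sum_(i \in B) a i); first by exists B.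
  by rewrite !fsbig_finite // ge0_sume_distrr.
- case=> y [B [finB BA] <-] <-; exists B => //.
  by rewrite !fsbig_finite // ge0_sume_distrr.
Qed.

Lemma esum_fiber (T U : choiceType) (p : T -> U) (a : T -> \bar R) :
  (forall t, 0 <= a t) ->
  \esum_(u in [set: U]) \esum_(t in [set t | p t = u]) a t = \esum_(t in [set: T]) a t.
Proof.
move=> a0; rewrite (@esum_esum R U T setT (fun u => [set t | p t = u]) (fun _ t => a t)) //.
rewrite (@reindex_esum R T (U * T)%type setT _ (fun t => (p t, t))) //.
split.
- by move=> t _ /=.
- by move=> t1 t2 _ _ [].
- by move=> [u t] [/= _ <-]; exists t.
Qed.

Lemma esum_single (T : choiceType) (a : T -> \bar R) (t0 : T) :
  (forall t, t <> t0 -> a t = 0) -> 0 <= a t0 ->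
  \esum_(t in [set: T]) a t = a t0.
Proof.
move=> h a0; rewrite -(esum_set1 a0) [RHS]esum_mkcond; apply: eq_esum => t _.
case: (boolP (t \in [set t0])) => // /negP tt0.
by rewrite h // => e; apply: tt0; apply: mem_set.
Qed.

Lemma esum_sub1 (mu : distr) (A : set mem) :
  0 <= \esum_(m in A) (mass mu m)%:E <= 1.
Proof.
apply/andP; split; first by apply: esum_ge0 => m _; rewrite lee_fin mass_ge0.
rewrite -(mass_sum mu) esum_mkcond; apply: le_esum => m _.
by case: ifP => // _; rewrite lee_fin mass_ge0.
Qed.

Lemma esum_fin (mu : distr) (A : set mem) :
  \esum_(m in A) (mass mu m)%:E \is a fin_num.
Proof.
have /andP[h1 h2] := esum_sub1 mu A.
by rewrite ge0_fin_numE // (le_lt_trans h2) // ltry.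
Qed.

Lemma CORE (rho : distr) (B : set Var) (g : mem -> R) :
  (forall m, 0 <= g m)%R -> (forall m, g (restr B m) = g m) ->
  \esum_(m in [set: mem]) (mass rho m * g m)%:E =
  \esum_(m' in [set: mem]) (marg B rho m' * g m')%:E.
Proof.
move=> g0 gB.
rewrite -(@esum_fiber mem mem (restr B)); last first.
  by move=> m; rewrite lee_fin mulr_ge0 // mass_ge0.
apply: eq_esum => m' _.
rewrite /marg EFinM fineK ?esum_fin // muleC -esumZl //; last first.
  by move=> m; rewrite lee_fin mass_ge0.
apply: eq_esum => m /= <-.
by rewrite gB -EFinM mulrC.
Qed.


Definition ind (A : set Var) (m' : mem) (m : mem) : R :=
  if `[< restr A m = m' >] then 1%R else 0%R.

Lemma ind_ge0 A m' m : (0 <= ind A m' m)%R.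
Proof. by rewrite /ind; case: ifP. Qed.

Lemma marg_Ex A nu m' : marg A nu m' = fine (Ex nu (ind A m')).
Proof.
rewrite /marg /Ex esum_mkcond; congr fine; apply: eq_esum => m _.
rewrite /ind; case: (boolP (m \in _)) => [/set_mem /= h|/negP h].
  by case: asboolP => // _; rewrite mulr1.
case: asboolP => [h'|_]; last by rewrite mulr0.
by exfalso; apply: h; apply: mem_set.
Qed.

Lemma MREFL (mu : distr) m' : mass mu m' = marg (dom mu) mu m'.
Proof.
rewrite marg_Ex /Ex (@esum_single _ _ m'); last 2 first.
- move=> m mm'; rewrite /ind; case: asboolP => [h|_]; last by rewrite mulr0.
  have [->|nz] := eqVneq (mass mu m) 0%R; first by rewrite mul0r.
  by exfalso; apply: mm'; rewrite -h memOn_restr //; apply: mass_on.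
- by rewrite lee_fin mulr_ge0 // ?mass_ge0 ?ind_ge0.
rewrite /= /ind; case: asboolP => [_|h]; first by rewrite mulr1.
have [->|nz] := eqVneq (mass mu m') 0%R; first by rewrite mul0r.
by exfalso; apply: h; rewrite memOn_restr //; apply: mass_on.
Qed.

Definition agree (mu nu : distr) (B : set Var) :=
  forall g : mem -> R, (forall m, 0 <= g m)%R -> (forall m, g (restr B m) = g m) ->
  Ex mu g = Ex nu g.

Lemma agree_of_marg (mu nu : distr) B :
  (forall m, mass mu m = marg B nu m) -> agree mu nu B.
Proof.
move=> h g g0 gB; rewrite /Ex (CORE nu g0 gB); apply: eq_esum => m _.
by rewrite h.
Qed.

Lemma agree_sym mu nu B : agree mu nu B -> agree nu mu B.
Proof. by move=> h g g0 gB; rewrite h. Qed.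

Lemma agree_trans mu nu rho B : agree mu nu B -> agree nu rho B -> agree mu rho B.
Proof. by move=> h1 h2 g g0 gB; rewrite h1 // h2. Qed.

Lemma agree_sub mu nu A B : A `<=` B -> agree mu nu B -> agree mu nu A.
Proof.
move=> AB h g g0 gA; apply: h => // m.
by rewrite -[in RHS]gA -(restr_sub m AB) gA.
Qed.

Lemma MM (nu rho : distr) (A B : set Var) :
  (forall m, mass nu m = marg B rho m) -> A `<=` B ->
  forall m', marg A nu m' = marg A rho m'.
Proof.
move=> h AB m'; rewrite !marg_Ex (agree_of_marg h) // => [m|m].
  exact: ind_ge0.
by rewrite /ind restr_sub.
Qed.


Lemma marg_ge0 (A : set Var) (nu : distr) (m : mem) : (0 <= marg A nu m)%R.
Proof. by apply: fine_ge0; apply: esum_ge0 => m0 _; rewrite lee_fin mass_ge0. Qed.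

Lemma marg_on (A : set Var) (nu : distr) (m : mem) : marg A nu m != 0%R -> memOn A m.
Proof.
move=> h; apply: contra_notP (negP h) => nm; apply/eqP.
rewrite /marg esum1 // => m0 /= e; exfalso; apply: nm; rewrite -e.
exact: restr_memOn.
Qed.

Lemma marg_cnt (A : set Var) (nu : distr) : countable [set m | marg A nu m != 0%R].
Proof.
apply: (@sub_countable _ _ _ (restr A @` [set m | mass nu m != 0%R])).
  apply: subset_card_le => m' /= h.
  apply: contra_notP (negP h) => nex; apply/eqP.
  rewrite /marg esum1 // => m0 /= e.
  have [->//|nz] := eqVneq (mass nu m0) 0%R.
  by exfalso; apply: nex; exists m0.
apply: card_le_trans (card_image_le _ _) _.
exact: mass_cnt.
Qed.

Lemma marg_sum (A : set Var) (nu : distr) : \esum_(m in [set: mem]) (marg A nu m)%:E = 1.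
Proof.
transitivity (\esum_(m in [set: mem]) (marg A nu m * 1)%:E).
  by apply: eq_esum => m _; rewrite mulr1.
rewrite -(@CORE nu A (fun _ => 1%R)) // -(mass_sum nu).
by apply: eq_esum => m _; rewrite mulr1.
Qed.

Definition margD (A : set Var) (Afin : finite_set A) (nu : distr) : distr :=
  @Distr R Var A Afin (marg A nu) (@marg_ge0 A nu) (@marg_on A nu) (@marg_cnt A nu)
    (@marg_sum A nu).

Definition z0 : mem := fun _ => 0%R.

Definition dirac_mass (m : mem) : R := if `[< m = z0 >] then 1%R else 0%R.

Lemma dirac_ge0 m : (0 <= dirac_mass m)%R.
Proof. by rewrite /dirac_mass; case: ifP. Qed.

Lemma dirac_on m : dirac_mass m != 0%R -> memOn set0 m.
Proof.
by rewrite /dirac_mass; case: asboolP => [-> _|_]; [move=> x _|rewrite eqxx].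
Qed.

Lemma dirac_cnt : countable [set m | dirac_mass m != 0%R].
Proof.
apply: (@sub_countable _ _ _ [set z0]); last exact: countable1.
apply: subset_card_le => m /=; rewrite /dirac_mass.
by case: asboolP => // _; rewrite eqxx.
Qed.

Lemma dirac_sum : \esum_(m in [set: mem]) (dirac_mass m)%:E = 1.
Proof.
rewrite (@esum_single _ _ z0).
- by rewrite /dirac_mass; case: asboolP.
- by move=> m mz; rewrite /dirac_mass; case: asboolP.
- by rewrite lee_fin dirac_ge0.
Qed.

Definition diracD : distr :=
  @Distr R Var set0 (finite_set0 _) dirac_mass dirac_ge0 dirac_on dirac_cnt dirac_sum.


Lemma fsprod_ge0 (I : choiceType) (P : set I) (F : I -> R) :
  (forall i, P i -> 0 <= F i)%R -> (0 <= \big[*%R/1%R]_(i \in P) F i)%R.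
Proof.
move=> PF; case: finite_supportP; rewrite ?big_nil// => X XP _ _.
rewrite big_seq_cond; apply: prodr_ge0 => i /andP[iX _]; apply: PF; exact: XP.
Qed.

Lemma PNA_transfer (mu nu : distr) (B : set Var) (S : set setset) :
  agree mu nu B -> bigU S `<=` B -> bigU S `<=` dom nu -> PNA mu S -> PNA nu S.
Proof.
move=> ag SB Sn [Sp [_ H]]; split => //; split => // T f cT f0 fm.
have TB : forall A : setset, T A -> (A : set Var) `<=` B.
  by move=> A TA x Ax; apply: SB; case: cT => _ [<- _]; exists A.
have g0 : forall A, T A -> forall m, (0 <= f A (restr A m))%R.
  by move=> A TA m; apply: f0 => //; exact: restr_memOn.
rewrite -ag; last 2 first.
- by move=> m; apply: fsprod_ge0 => A TA; exact: g0.
- by move=> m; apply: eq_fsbigr => A /set_mem TA; rewrite restr_sub //; exact: TB.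
rewrite (eq_fsbigr (fun A => Ex mu (fun m => f A (restr A m)))); first exact: H.
move=> A /set_mem TA; rewrite ag //; first exact: g0.
by move=> m; rewrite restr_sub //; exact: TB.
Qed.

Lemma bigU0 : bigU (@set0 setset) = set0.
Proof. by rewrite /bigU bigcup_set0. Qed.

Lemma PNA_empty (mu : distr) : PNA mu set0.
Proof.
split; first by split => // A B [].
split; first by rewrite bigU0.
move=> T f [[Tn _] [TU _]] _ _.
have -> : T = set0.
  apply/seteqP; split => // A TA; case: (Tn A TA) => x Ax.
  have : bigU T x by exists A.
  by rewrite TU bigU0.
rewrite !fsbig_set0 /Ex (eq_esum (b := fun m => (mass mu m)%:E)); first by rewrite mass_sum.
by move=> m _; rewrite fsbig_set0 mulr1.
Qed.


Lemma part_eq (Q : set setset) : is_partition Q ->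
  forall B B' x, Q B -> Q B' -> (B : set Var) x -> (B' : set Var) x -> B = B'.
Proof.
move=> [_ Qd] B B' x QB QB' Bx B'x; apply: contrapT => ne.
have e := Qd _ _ QB QB' ne.
have : ((B : set Var) `&` B') x by split.
by rewrite e.
Qed.

Lemma PNA_G (mu : distr) (P Q : set setset) (h : setset -> setset) :
  PNA mu P -> is_partition Q -> bigU Q `<=` dom mu ->
  (forall B, Q B -> (B : set Var) `<=` h B) ->
  (forall B1 B2, Q B1 -> Q B2 -> B1 <> B2 -> (h B1 : set Var) `&` h B2 = set0) ->
  (forall B, Q B -> forall x, (h B : set Var) x ->
     exists C, P C /\ (C : set Var) `<=` h B /\ (C : set Var) x) ->
  (forall x, bigU P x -> exists2 B, Q B & (h B : set Var) x) ->
  PNA mu Q.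
Proof.
move=> [Pp [Pdom HP]] Qp Qdom hsub hdisj hunion hcover.
split => //; split => // U f [Up [UQ Ublk]] f0 fm.
have [Qn Qd] := Qp; have [Un Ud] := Up.
pose QU := bigU Q.
have K1 : forall D B, U D -> Q B -> forall x, (B : set Var) x -> (D : set Var) x ->
    (B : set Var) `<=` D.
  move=> D B UD QB x Bx Dx.
  have [F [FQ DF]] := Ublk D UD.
  move: Dx; rewrite DF => -[B' FB' B'x].
  have eB := part_eq Qp QB (FQ _ FB') Bx B'x.
  by move=> y By; exists B'; rewrite // -eB.
pose star (D : setset) : setset :=
  \bigcup_(B in [set B : setset | Q B /\ (B : set Var) `<=` D]) (h B : set Var).
have K2 : forall D, U D -> (D : set Var) `<=` star D.
  move=> D UD x Dx.
  have : bigU U x by exists D.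
  rewrite UQ => -[B QB Bx].
  exists B; [split => //; exact: K1 UD QB x Bx Dx | exact: hsub].
have K3 : forall D1 D2, U D1 -> U D2 -> D1 <> D2 ->
    forall x, (star D1 : set Var) x -> (star D2 : set Var) x -> False.
  move=> D1 D2 U1 U2 ne x [B1 [QB1 B1D1] h1x] [B2 [QB2 B2D2] h2x].
  have neB : B1 <> B2.
    move=> e; case: (Qn _ QB1) => y B1y.
    have e' := Ud _ _ U1 U2 ne.
    have : ((D1 : set Var) `&` D2) y by split; [exact: B1D1|rewrite e in B1y; exact: B2D2].
    by rewrite e'.
  have e := hdisj _ _ QB1 QB2 neB.
  have : ((h B1 : set Var) `&` h B2) x by [].
  by rewrite e.
have K4 : forall D, U D -> (star D : set Var) `&` QU = D.
  move=> D UD; apply/seteqP; split => x.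
  - move=> [sx qx].
    have : bigU U x by rewrite UQ.
    case=> D' UD' D'x.
    case: (pselect (D = D')) => [-> //| ne].
    by exfalso; apply: (K3 _ _ UD UD' ne x sx); exact: K2.
  - move=> Dx; split; first exact: K2.
    by rewrite /QU -UQ; exists D.
have starinj : set_inj U star.
  by move=> D1 D2 /set_mem U1 /set_mem U2 e; rewrite -(K4 _ U1) -(K4 _ U2) e.
pose fs (E : setset) (m : mem) : R :=
  f ((E : set Var) `&` QU) (restr ((E : set Var) `&` QU) m).
have cU' : coarsens (star @` U) P.
  split; [split|split].
  - move=> _ [D UD <-]; case: (Un _ UD) => x Dx; exists x; exact: K2.
  - move=> _ _ [D1 U1 <-] [D2 U2 <-] ne.
    apply/seteqP; split => // x [a b].
    by apply: (K3 D1 D2 U1 U2 _ x a b) => e; apply: ne; rewrite e.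
  - apply/seteqP; split => x.
    + move=> [_ [D UD <-] [B [QB _] hx]].
      have [C [PC [_ Cx]]] := hunion B QB x hx.
      by exists C.
    + move=> Px; have [B QB hx] := hcover x Px.
      case: (Qn _ QB) => y By.
      have : bigU U y by rewrite UQ; exists B.
      case=> D UD Dy.
      exists (star D); first by exists D.
      by exists B => //; split => //; exact: K1 UD QB y By Dy.
  - move=> _ [D UD <-].
    exists [set C | P C /\ (C : set Var) `<=` star D]; split; first by move=> C [].
    apply/(@seteqP Var); split => x.
    + move=> [B [QB BD] hx].
      have [C [PC [Ch Cx]]] := hunion B QB x hx.
      by exists C => //; split => // y Cy; exists B => //; exact: Ch.
    + by move=> [C [_ CD] Cx]; apply: CD.
have E1 : forall D, U D -> forall m, fs (star D) (restr (star D) m) = f D (restr D m).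
  by move=> D UD m; rewrite /fs K4 // restr_sub //; exact: K2.
have := HP (star @` U) fs cU'.
have f0' : forall A, (star @` U) A -> forall m, memOn A m -> (0 <= fs A m)%R.
  by move=> _ [D UD <-] m _; rewrite /fs K4 //; apply: f0 => //; exact: restr_memOn.
have fm' : (forall A, (star @` U) A -> nondecr_on A (fs A)) \/
           (forall A, (star @` U) A -> nonincr_on A (fs A)).
  case: fm => fm; [left|right] => _ [D UD <-] m1 m2 _ _ le; rewrite /fs K4 //;
    (apply: (fm D UD); [exact: restr_memOn | exact: restr_memOn |
      by move=> y; rewrite /restr; case: asboolP]).
move=> /(_ f0' fm').
rewrite fsbig_image //.
rewrite (eq_fsbigr (fun D => Ex mu (fun m => f D (restr D m)))); last first.
  by move=> D /set_mem UD; congr Ex; apply/funext => m; exact: E1.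
have -> // : (fun m => \big[*%R/1%R]_(E \in star @` U) fs E (restr E m)) =
        (fun m => \big[*%R/1%R]_(D \in U) f D (restr D m)).
apply/funext => m; rewrite fsbig_image //; apply: eq_fsbigr => D /set_mem UD.
exact: E1.
Qed.


Lemma disjE (A B : set Var) : A `&` B = set0 -> forall v, A v -> B v -> False.
Proof. by move=> e v a b; have : (A `&` B) v by []; rewrite e. Qed.

Lemma mk_disj (A B : set Var) : (forall v, A v -> B v -> False) -> A `&` B = set0.
Proof. by move=> h; apply/seteqP; split => // v [a b]; case: (h v a b). Qed.

Definition restrP (P : set setset) (Y : set Var) : set setset :=
  [set B : setset | (B : set Var) !=set0 /\
     exists2 A : setset, P A & (B : set Var) = (A : set Var) `&` Y].

Lemma bigU_restrP (P : set setset) Y : bigU (restrP P Y) `<=` Y.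
Proof. by move=> v [B [_ [A _ e]] Bv]; move: Bv; rewrite e => -[]. Qed.

Lemma PNA_restr (mu : distr) (P : set setset) (Y : set Var) :
  PNA mu P -> PNA mu (restrP P Y).
Proof.
move=> hP; have [Pp [Pdom _]] := hP.
have Qp : is_partition (restrP P Y).
  split; first by move=> B [].
  move=> B1 B2 [_ [A1 PA1 e1]] [_ [A2 PA2 e2]] ne.
  apply: mk_disj => x; rewrite e1 e2 => -[A1x _] [A2x _].
  by apply: ne; rewrite e1 e2 (part_eq Pp PA1 PA2 A1x A2x).
case: (pselect (exists B, restrP P Y B)) => [[B0 QB0]|none]; last first.
  have -> : restrP P Y = set0.
    by apply/seteqP; split => // B QB; apply: none; exists B.
  exact: PNA_empty.
pose h (B : setset) : setset := bigU [set A : setset | P A /\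
   ((A : set Var) `&` Y = B \/ (B = B0 /\ (A : set Var) `&` Y = set0))].
apply: (@PNA_G mu P _ h hP Qp).
- move=> x [B [_ [A PA e]] Bx]; apply: Pdom; exists A => //.
  by move: Bx; rewrite e => -[].
- move=> B [_ [A PA e]] x Bx; exists A; first by split => //; left; rewrite e.
  by move: Bx; rewrite e => -[].
- move=> B1 B2 [B1n [A1 PA1 e1]] [B2n _] ne; apply: mk_disj => x.
  move=> [C1 [PC1 c1] C1x] [C2 [PC2 c2] C2x].
  have eC := part_eq Pp PC1 PC2 C1x C2x; rewrite -eC in c2.
  case: c1 => c1; case: c2 => c2.
  + by apply: ne; rewrite -c1 -c2.
  + by case: B1n => y; rewrite -c1 c2.2.
  + by case: B2n => y; rewrite -c2 c1.2.
  + by apply: ne; rewrite c1.1 c2.1.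
- move=> B QB x [C [PC c] Cx]; exists C; split => //; split => // y Cy.
  by exists C.
- move=> x [A PA Ax].
  case: (pselect (((A : set Var) `&` Y) !=set0)) => [ne|ne].
  + exists ((A : set Var) `&` Y); first by split => //; exists A.
    by exists A => //; split => //; left.
  + exists B0 => //; exists A => //; split => //; right; split => //.
    by apply/seteqP; split => // y yy; apply: ne; exists y.
Qed.

Lemma PNA_coarsen (mu : distr) (P Q : set setset) :
  PNA mu P -> is_partition Q -> bigU Q `<=` dom mu ->
  (forall B, Q B -> forall x, (B : set Var) x ->
     exists C, P C /\ (C : set Var) `<=` B /\ (C : set Var) x) ->
  (forall x, bigU P x -> bigU Q x) -> PNA mu Q.
Proof.
move=> hP Qp Qd hb hc; apply: (@PNA_G mu P Q id hP Qp Qd) => //.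
- by move=> B _.
- by case: Qp.
Qed.

Lemma part_U (S T : set setset) : is_partition S -> is_partition T ->
  bigU S `&` bigU T = set0 -> is_partition (S `|` T).
Proof.
move=> [Sn Sd] [Tn Td] e; split; first by move=> A [/Sn|/Tn].
move=> A B [SA|TA] [SB|TB] ne.
- exact: Sd.
- by apply: mk_disj => v Av Bv; apply: (@disjE _ _ e v); [exists A|exists B].
- by apply: mk_disj => v Av Bv; apply: (@disjE _ _ e v); [exists B|exists A].
- exact: Td.
Qed.

Lemma bigUU (S T : set setset) : bigU (S `|` T) = bigU S `|` bigU T.
Proof. by rewrite /bigU bigcup_setU. Qed.


Lemma dle_refl (mu : distr) : dle mu mu.
Proof. by split => // m; exact: MREFL. Qed.

Lemma dle_trans (x y z : distr) : dle x y -> dle y z -> dle x z.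
Proof.
move=> [d1 m1] [d2 m2]; split; first exact: subset_trans d2.
by move=> m'; rewrite m1 (MM m2 d1).
Qed.

Lemma oplus_comm (x y z : distr) : oplus x y z -> oplus y x z.
Proof.
move=> [d [e [mx [my H]]]]; split; first by rewrite setIC.
split; first by rewrite setUC.
split => //; split => // S T Sp Sd Tp Td PS PT.
by rewrite setUC; exact: H.
Qed.

Lemma restr0 (m : mem) : restr set0 m = z0.
Proof. by apply/funext => v; rewrite /restr; case: asboolP. Qed.

Lemma marg0 (nu : distr) m' : marg set0 nu m' = dirac_mass m'.
Proof.
rewrite /marg /dirac_mass; case: asboolP => [->|ne].
  rewrite (_ : [set m | restr set0 m = z0] = setT) ?mass_sum //.
  by apply/seteqP; split => // m _ /=; rewrite restr0.
rewrite esum1 // => m /= e; exfalso; apply: ne; by rewrite -e restr0.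
Qed.

Lemma unit_ex (x : distr) : exists2 e, [set: distr] e & oplus e x x.
Proof.
exists diracD => //; split; first by rewrite /= set0I.
split; first by rewrite /= set0U.
split; first by move=> m' /=; rewrite marg0.
split; first by move=> m'; rewrite -MREFL.
move=> S T [Sn _] Sd _ _ _ PT.
have -> : S = set0.
  apply/seteqP; split => // A SA; case: (Sn A SA) => y Ay.
  have : bigU S y by exists A.
  by move/Sd.
by rewrite set0U.
Qed.

Lemma unit_coh (e x y : distr) : oplus y e x -> dle y x.
Proof.
move=> [d [ed [my _]]]; split; first by rewrite ed; exact: subsetUl.
by move=> m; rewrite my.
Qed.


Lemma down_closed (x y z x' y' : distr) : oplus x y z -> dle x' x -> dle y' y ->
  exists2 z', dle z' z & oplus x' y' z'.
Proof.
move=> [dxy [dz [mx [my H]]]] [dx' mx'] [dy' my'].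
have fin : finite_set (dom x' `|` dom y').
  by rewrite finite_setU; split; apply: dom_fin.
pose z' := margD fin z.
have agz : agree z' z (dom z') by apply: agree_of_marg.
exists z'.
  split => //=; rewrite dz; exact: setUSS.
split.
  apply: mk_disj => v a b; apply: (@disjE _ _ dxy v); [exact: dx'|exact: dy'].
split => //.
split.
  move=> m'; rewrite (@MM z' z (dom x') (dom z')) //=.
  by rewrite -(@MM x z (dom x') (dom x) (fun m => esym (mx m)) dx') mx'.
split.
  move=> m'; rewrite (@MM z' z (dom y') (dom z')) //=.
  by rewrite -(@MM y z (dom y') (dom y) (fun m => esym (my m)) dy') my'.
move=> S T Sp Sd Tp Td PS PT.
have PSx : PNA x S.
  exact: (PNA_transfer (agree_of_marg mx') Sd (subset_trans Sd dx') PS).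
have PTy : PNA y T.
  exact: (PNA_transfer (agree_of_marg my') Td (subset_trans Td dy') PT).
have PZ := H S T Sp (subset_trans Sd dx') Tp (subset_trans Td dy') PSx PTy.
have sub : bigU (S `|` T) `<=` dom x' `|` dom y' by rewrite bigUU; exact: setUSS.
exact: (PNA_transfer (agree_sym agz) sub sub PZ).
Qed.


Lemma assoc (x y z t w : distr) : oplus t z w -> oplus x y t ->
  exists2 s, oplus y z s & oplus x s w.
Proof.
move=> [dtz [dw [mt [mz Hw]]]] [dxy [dt [mx [my Ht]]]].
have fin : finite_set (dom y `|` dom z).
  by rewrite finite_setU; split; apply: dom_fin.
pose s := margD fin w.
have ags : agree s w (dom s) by apply: agree_of_marg.
have agt : agree t w (dom t) by apply: agree_of_marg => m; rewrite mt.
have agy : agree y t (dom y) by apply: agree_of_marg => m; rewrite my.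
have agz : agree z w (dom z) by apply: agree_of_marg => m; rewrite mz.
have yt : dom y `<=` dom t by rewrite dt; exact: subsetUr.
have xt : dom x `<=` dom t by rewrite dt; exact: subsetUl.
have ydz : dom y `&` dom z = set0.
  by apply: mk_disj => v a b; apply: (@disjE _ _ dtz v) => //; exact: yt.
have xds : dom x `&` (dom y `|` dom z) = set0.
  apply: mk_disj => v a [b|b].
    exact: (@disjE _ _ dxy v).
  by apply: (@disjE _ _ dtz v) => //; exact: xt.
have mtw : forall m, mass t m = marg (dom t) w m by move=> m; rewrite mt.
exists s.
  split => //; split => //.
  split.
    move=> m'; rewrite (@MM s w (dom y) (dom s)) //=.
    by rewrite -(@MM t w (dom y) (dom t) mtw yt) my.
  split.
    move=> m'; rewrite (@MM s w (dom z) (dom s)) //=.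
  move=> Sy Sz Syp Syd Szp Szd Py Pz.
  have Pt : PNA t Sy.
    have P0 := PNA_empty x; have [P0p _] := P0.
    have := Ht set0 Sy P0p _ Syp Syd P0 Py; rewrite set0U; apply.
    by rewrite bigU0.
  have [Ptp [Ptd _]] := Pt.
  have Pw := Hw Sy Sz Ptp Ptd Szp Szd Pt Pz.
  have sub : bigU (Sy `|` Sz) `<=` dom y `|` dom z by rewrite bigUU; exact: setUSS.
  exact: (PNA_transfer (agree_sym ags) sub sub Pw).
split => //.
split; first by rewrite dw dt setUA.
split.
  by move=> m'; rewrite -(@MM t w (dom x) (dom t) mtw xt) mx.
split => //.
move=> S T' Sp Sd T'p T'd PS PT'.
have ys : dom y `<=` dom s by exact: subsetUl.
have zs : dom z `<=` dom s by exact: subsetUr.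
have agsy : agree s y (dom y).
  apply: agree_trans (agree_sub ys ags) _.
  apply: agree_trans (agree_sym (agree_sub yt agt)) _.
  exact: agree_sym agy.
have agsz : agree s z (dom z).
  exact: agree_trans (agree_sub zs ags) (agree_sym agz).
have PTy : PNA y (restrP T' (dom y)).
  exact: (PNA_transfer agsy (@bigU_restrP _ _) (@bigU_restrP _ _) (PNA_restr (dom y) PT')).
have PTz : PNA z (restrP T' (dom z)).
  exact: (PNA_transfer agsz (@bigU_restrP _ _) (@bigU_restrP _ _) (PNA_restr (dom z) PT')).
have [PTyp [PTyd _]] := PTy.
have [PTzp [PTzd _]] := PTz.
have Pt := Ht S _ Sp Sd PTyp PTyd PS PTy.
have [Ptp [Ptd _]] := Pt.
have Pw := Hw _ _ Ptp Ptd PTzp PTzd Pt PTz.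
apply: (PNA_coarsen Pw).
- apply: part_U => //; apply: mk_disj => v a b.
  by apply: (@disjE _ _ xds v); [exact: Sd|exact: T'd].
- rewrite bigUU dw dt => v [a|b].
    by left; left; exact: Sd.
  by have [c|c] := T'd v b; [left; right|right].
- move=> B [SB|T'B] v Bv.
    by exists B; split; [left; left|split].
  have [c|c] := T'd v (ex_intro2 _ _ B T'B Bv).
  + exists ((B : set Var) `&` dom y); split.
      by left; right; split; [exists v|exists B].
    by split; [exact: subIsetl|].
  + exists ((B : set Var) `&` dom z); split.
      by right; split; [exists v|exists B].
    by split; [exact: subIsetl|].
- move=> v [C [[SC|TyC]|TzC] Cv].
  + by exists C => //; left.
  + case: TyC => _ [A T'A e]; exists A; first by right.
    by move: Cv; rewrite e => -[].
  + case: TzC => _ [A T'A e]; exists A; first by right.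
    by move: Cv; rewrite e => -[].
Qed.

End S.

Unset Implicit Arguments.

Theorem mainTheorem7 (R : realType) (Var : Type) :
  DownClosedBIFrame (@dle R Var) (@oplus R Var) [set: @distr R Var].
Proof.
split; first by split; [exact: dle_refl | exact: dle_trans].
split; first exact: down_closed.
split; first exact: oplus_comm.
split; first exact: assoc.
split; first exact: unit_ex.
split; first by move=> e x y _; exact: unit_coh.
by [].
Qed.
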